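(* Let $b>1$, $p\ge1$, $R\subseteq\{0,\ldots,p-1\}$ and let $I\subseteq\mathbb{N}$ be finite and non-empty. Let $k$ be the greatest divisor of $p$ coprime with $b$ and $d=p/k$. A state $s$ of $\mathcal{C}_{R,p,I}$ belongs to a $0$-circuit if and only if either $s$ is the initial state, or $s=(xd,\bot)$ for some $x\in\{0,\ldots,k-1\}$.
   Context: $A_b=\{0,\ldots,b-1\}$. $\mathcal{A}_{R,p}$: states $\{0,\ldots,p-1\}$, initial $0$, final $R$, transitions $n\xrightarrow{a}(nb+a)\bmod p$. With $m=\max I$, $\mathcal{B}_I$: states $\{0,\ldots,m\}\cup\{\bot\}$, initial $0$, final $I$, transitions $i\xrightarrow{a}ib+a$ if $ib+a\le m$, else $i\xrightarrow{a}\bot$, and $\bot\xrightarrow{a}\bot$. $\mathcal{C}_{R,p,I}$ is the accessible part (states reachable from the initial state $(0,0)$) of the product of $\mathcal{A}_{R,p}$ and $\mathcal{B}_I$, with transitions $(s,t)\xrightarrow{a}(s',t')$ iff $s\xrightarrow{a}s'$ and $t\xrightarrow{a}t'$, and $(s,t)$ final iff exactly one of $s\in R$, $t\in I$ holds. A $0$-circuit is a circuit all of whose transitions are labelled $0$. *)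

(* Defs.v *)
From mathcomp Require Import all_boot.
Set Implicit Arguments. Unset Strict Implicit. Unset Printing Implicit Defensive.

(* States of A_{R,p} are naturals n < p; states of B_I are [Some i] (i <= m)
   and [None] = bottom. *)
Definition Bstate := option nat.

Definition maxI (I : seq nat) : nat := \max_(i <- I) i.

Definition deltaA (b p : nat) (n a : nat) : nat := (n * b + a) %% p.

Definition deltaB (b m : nat) (t : Bstate) (a : nat) : Bstate :=
  match t with
  | Some i => if i * b + a <= m then Some (i * b + a) else None
  | None => None
  end.

Definition deltaC (b p m : nat) (st : nat * Bstate) (a : nat) : nat * Bstate :=
  (deltaA b p st.1 a, deltaB b m st.2 a).

Definition initC : nat * Bstate := (0, Some 0).

Definition finalC (R I : seq nat) (st : nat * Bstate) : bool :=
  (st.1 \in R) (+) (if st.2 is Some i then i \in I else false).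

(* the states of C_{R,p,I}: the accessible part of the product *)
Definition accessibleC (b p m : nat) (st : nat * Bstate) : Prop :=
  exists w : seq nat, all (fun a => a < b) w /\ foldl (deltaC b p m) initC w = st.

(* s lies on a 0-circuit: a nonempty closed path of 0-labelled transitions
   through s (the product automaton is deterministic, so this is iteration). *)
Definition on_zero_circuit (b p m : nat) (st : nat * Bstate) : Prop :=
  exists n, 0 < n /\ iter n (fun s => deltaC b p m s 0) st = st.

Definition kdiv (p b : nat) : nat := \max_(d < p.+1 | (d %| p) && coprime d b) d.

(* Main.v *)
Require Import Defs.
From mathcomp Require Import all_boot.

Lemma period (k b : nat) : 0 < k -> coprime k b -> exists n, 0 < n /\ b ^ n %% k = 1 %% k.
Proof.
move=> k0 cb.
case: (posnP b) => [b0'|b0].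
  by exists 1; move: cb; rewrite b0' /coprime gcdn0 => /eqP ->; rewrite !modn1.
set s := [seq b ^ i %% k | i <- iota 0 k.+1].
have nu : ~~ uniq s.
  apply/negP => us.
  suff: k.+1 <= k by rewrite ltnn.
  have := uniq_leq_size us (s2 := iota 0 k).
  rewrite size_map size_iota size_iota; apply.
  move=> y /mapP [i _ ->]; rewrite mem_iota add0n ltn_pmod //.
have [i [j [ij jlt E]]] := uniqPn 0 nu.
rewrite size_map size_iota in jlt.
rewrite !(nth_map 0) ?size_iota ?(ltn_trans ij) // !nth_iota ?(ltn_trans ij) // !add0n in E.
exists (j - i); split; first by rewrite subn_gt0.
have le : b ^ i <= b ^ j by rewrite leq_pexp2l // ltnW.
have : k %| b ^ j - b ^ i by rewrite -eqn_mod_dvd // E.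
rewrite -(subnKC (ltnW ij)) expnD -{2}(muln1 (b ^ i)) -mulnBr Gauss_dvdr; last first.
  by rewrite coprimeXr.
rewrite addKn -eqn_mod_dvd; first by move/eqP.
by rewrite expn_gt0 b0.
Qed.

Section S.
Variables (b p m : nat).
Let f := fun s => deltaC b p m s 0.
Let g := fun t => deltaB b m t 0.

Lemma iter1 n s : (iter n f s).1 %% p = (s.1 * b ^ n) %% p.
Proof.
elim: n => [|n IH]; first by rewrite muln1.
rewrite iterS /f /deltaC /= /deltaA addn0 modn_mod -modnMml IH modnMml expnSr mulnA.
done.
Qed.

Lemma iter2 n s : (iter n f s).2 = iter n g s.2.
Proof. by elim: n => //= n ->. Qed.

Lemma iterNone n : iter n g None = None.
Proof. by elim: n => //= n ->. Qed.

Lemma iterSome n i j : iter n g (Some i) = Some j -> j = i * b ^ n.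
Proof.
elim: n j => [|n IH] j /=; first by case=> <-; rewrite muln1.
case E: (iter n g (Some i)) => [j'|] //=; rewrite /g /= addn0.
case: ifP => // _ [<-]; by rewrite (IH _ E) expnSr mulnA.
Qed.

Lemma iter_lt n s : 0 < p -> 0 < n -> (iter n f s).1 < p.
Proof. by move=> p0; case: n => //= n _; rewrite /f /deltaC /deltaA /= ltn_pmod. Qed.

Lemma acc_inv s : 0 < p -> accessibleC b p m s ->
  s.1 < p /\ (forall i, s.2 = Some i -> s.1 = i %% p).
Proof.
move=> p0 [w [_ <-]].
have: initC.1 < p /\ (forall i, initC.2 = Some i -> initC.1 = i %% p).
  by split=> // i [<-]; rewrite mod0n.
elim: w initC => //= a w IH [n t] /= [H1 H2]; apply: IH.
split; first by rewrite /deltaA ltn_pmod.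
case: t H2 => [i0|] //= H2 i.
case: ifP => // _ [<-].
by rewrite /deltaA (H2 i0) // -modnDml modnMml modnDml.
Qed.
End S.

Lemma kmax {p b e} : 0 < p -> e %| p -> coprime e b -> e <= kdiv p b.
Proof.
move=> p0 ep eb.
have H : e < p.+1 by rewrite ltnS dvdn_leq.
rewrite /kdiv.
exact: (leq_bigmax_cond (F := fun d : 'I_p.+1 => nat_of_ord d)
  (P := fun d : 'I_p.+1 => (d %| p) && coprime d b) (Ordinal H) (introT andP (conj ep eb))).
Qed.

Lemma kP p b : 0 < p -> kdiv p b %| p /\ coprime (kdiv p b) b.
Proof.
move=> p0.
have H : 1 < p.+1 by rewrite ltnS.
pose P := fun d : 'I_p.+1 => (d %| p) && coprime d b.
have P1 : P (Ordinal H) by rewrite /P /= dvd1n coprime1n.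
rewrite /kdiv (bigmax_eq_arg (Ordinal H) (P := P) (F := fun d : 'I_p.+1 => nat_of_ord d) P1).
by case: arg_maxnP => // i /andP [].
Qed.

Theorem lemma38 (b p : nat) (R I : seq nat) :
  1 < b -> 1 <= p -> all (fun r => r < p) R -> I != [::] ->
  forall s : nat * Bstate, accessibleC b p (maxI I) s ->
  (on_zero_circuit b p (maxI I) s <->
   s = initC \/
   exists x, x < kdiv p b /\ s = (x * (p %/ kdiv p b), None)).
Proof.
move=> b1 p0 _ _ s acc.
have [sp inv] := @acc_inv b p (maxI I) s p0 acc.
set k := kdiv p b.
have [kp kb] := kP p b p0.
have k0 : 0 < k by rewrite (kmax p0 (dvd1n p) (coprime1n b)).
set d := p %/ k.
have Ep : p = k * d by rewrite /d mulnC divnK.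
have d0 : 0 < d by move: p0; rewrite Ep muln_gt0 => /andP [].
have b0 : 0 < b by apply: ltnW.
split.
- move=> [n [n0 Hit]].
  have bn1 : 1 < b ^ n by have := ltn_exp2l 0 n b1; rewrite expn0 n0.
  have bn0 : 0 < b ^ n by apply: ltnW.
  case: s acc sp inv Hit => a [i|] acc sp inv Hit.
  + have := iter2 b p (maxI I) n (a, Some i); rewrite Hit /= => /esym/iterSome E.
    case: (posnP i) => [i0|ip].
      by left; move: inv; rewrite i0 /= => /(_ 0 erefl) ->; rewrite mod0n.
    exfalso; have : i * 1 < i * b ^ n by rewrite ltn_pmul2l.
    by rewrite muln1 -E ltnn.
  + right; simpl in sp.
    have := iter1 b p (maxI I) n (a, None); rewrite Hit /= (modn_small sp) => Ea.
    have hp : p %| a * (b ^ n - 1).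
      rewrite mulnBr muln1 -eqn_mod_dvd; last by rewrite leq_pmulr.
      by rewrite -Ea modn_small.
    have cop : coprime d (b ^ n - 1).
      set g := gcdn d (b ^ n - 1).
      have g0 : 0 < g by rewrite gcdn_gt0 d0.
      have cb : coprime (b ^ n - 1) b.
        rewrite -(coprime_pexpr _ _ n0) subn1 coprime_sym.
        by rewrite -{1}(prednK bn0) coprimeSn.
      have : g * k <= k.
        apply: kmax => //.
          by rewrite Ep mulnC dvdn_mul // dvdn_gcdl.
        by rewrite coprimeMl kb andbT (coprime_dvdl (dvdn_gcdr _ _) cb).
      rewrite -{2}(mul1n k) leq_pmul2r // => g1.
      by rewrite /coprime -/g eqn_leq g1 g0.
    have da : d %| a.
      rewrite -(Gauss_dvdl _ cop); apply: dvdn_trans hp.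
      by rewrite Ep dvdn_mull.
    exists (a %/ d); split.
      by rewrite ltn_divLR // -Ep.
    by rewrite divnK.
- move=> [->|[x [xk ->]]].
    by exists 1; rewrite /= /deltaC /deltaA /deltaB /= mod0n.
  have [n [n0 Hn]] := @period k b k0 kb.
  exists n; split => //.
  rewrite [iter _ _ _]surjective_pairing iter2 iterNone /=.
  have xdp : x * d < p by rewrite Ep ltn_pmul2r.
  congr pair.
  rewrite -(modn_small (iter_lt _ _ _ _ _ p0 n0)) iter1 /=.
  have -> : x * d * b ^ n = x * b ^ n * d by rewrite mulnAC.
  rewrite -{1}(modn_small xdp) Ep -!muln_modl.
  by rewrite -modnMmr Hn modnMmr muln1.
Qed.
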